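(* There exist a residual subset $P_0\subseteq\mathbb{T}$ and a subset $G\subseteq\mathbb{T}$ of full Lebesgue measure such that for every $\alpha\in P_0$ and every $\beta\in G$, the sequence $\{\alpha n^3+\beta n^2\}_{n\ge0}$ in $\mathbb{T}$ has the repetition property.
   Context: $\mathbb{T}=\mathbb{R}/\mathbb{Z}$ with metric $\mathrm{dist}(x,y)=\langle x-y\rangle$, where $\langle\tau\rangle=\min\{|\hat\tau-p|:p\in\mathbb{Z}\}$ for any representative $\hat\tau\in\mathbb{R}$ of $\tau$; for $\alpha,\beta\in\mathbb{T}$ and integer $n$, $\alpha n^3+\beta n^2$ is a well-defined element of $\mathbb{T}$. $\mathbb{Z}_+=\{1,2,\ldots\}$. A sequence $\{\omega_n\}_{n\ge0}$ in a metric space $\Omega$ has the repetition property if for every $\varepsilon>0$ and $r \in \mathbb{Z}_+$ there exists $q \in \mathbb{Z}_+$ such that $\mathrm{dist}(\omega_n,\omega_{n+q}) < \varepsilon$ for $n = 0,1,\ldots, rq$. *)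

(* Defs.v *)
From Stdlib Require Import Reals.
Open Scope R_scope.

(* The torus T = R/Z is represented through real representatives.
   <tau> = distance from tau to the nearest integer
         = min(frac tau, 1 - frac tau). *)
Definition tnorm (x : R) : R := Rmin (frac_part x) (1 - frac_part x).

Definition tdist (x y : R) : R := tnorm (x - y).

(* A subset of T, given by its (Z-periodic) preimage in R. *)
Definition periodic (A : R -> Prop) : Prop :=
  forall x, A x <-> A (x + 1).

Definition is_open (U : R -> Prop) : Prop :=
  forall x, U x -> exists d, 0 < d /\ forall y, Rabs (y - x) < d -> U y.

Definition is_dense (U : R -> Prop) : Prop :=
  forall x d, 0 < d -> exists y, U y /\ Rabs (y - x) < d.

(* residual = contains a countable intersection of dense open sets.
   For a periodic set this is equivalent to being residual in T. *)
Definition residual (A : R -> Prop) : Prop :=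
  exists U : nat -> R -> Prop,
    (forall k, is_open (U k)) /\ (forall k, is_dense (U k)) /\
    (forall x, (forall k, U k x) -> A x).

Definition lebesgue_null (N : R -> Prop) : Prop :=
  forall eps, 0 < eps ->
    exists a b : nat -> R,
      (forall k, a k <= b k) /\
      (forall x, N x -> exists k, a k < x < b k) /\
      (forall m, sum_f_R0 (fun k => b k - a k) m <= eps).

Definition full_measure (A : R -> Prop) : Prop :=
  lebesgue_null (fun x => ~ A x).

Definition repetition_property (w : nat -> R) : Prop :=
  forall eps, 0 < eps -> forall r : nat, (1 <= r)%nat ->
    exists q : nat, (1 <= q)%nat /\
      forall n : nat, (n <= r * q)%nat -> tdist (w n) (w (n + q)%nat) < eps.

Definition cubic_seq (alpha beta : R) (n : nat) : R :=
  alpha * (INR n) ^ 3 + beta * (INR n) ^ 2.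

(* Main.v *)
Require Import Defs.
From Stdlib Require Import Reals Lra Lia List Classical ClassicalEpsilon ZArith.
Open Scope R_scope.

Lemma tnorm_le (x : R) (z : Z) : tnorm x <= Rabs (x - IZR z).
Proof.
  unfold tnorm, frac_part.
  set (n := Int_part x).
  destruct (base_Int_part x) as [H1 H2]. fold n in H1, H2.
  destruct (Z.le_gt_cases z n) as [Hz|Hz].
  - apply IZR_le in Hz.
    apply Rle_trans with (x - IZR n); [apply Rmin_l|].
    rewrite Rabs_right; lra.
  - assert (Hz' : (z >= n + 1)%Z) by lia.
    apply Z.ge_le in Hz'. apply IZR_le in Hz'. rewrite plus_IZR in Hz'.
    apply Rle_trans with (1 - (x - IZR n)); [apply Rmin_r|].
    rewrite Rabs_left1; lra.
Qed.

Lemma tnorm_att (x : R) : exists z, tnorm x = Rabs (x - IZR z).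
Proof.
  unfold tnorm, frac_part.
  destruct (base_Int_part x) as [H1 H2].
  apply Rmin_case.
  - exists (Int_part x). rewrite Rabs_right; lra.
  - exists (Int_part x + 1)%Z. rewrite plus_IZR. rewrite Rabs_left1; lra.
Qed.

Lemma tnorm_ge0 x : 0 <= tnorm x.
Proof. destruct (tnorm_att x) as [z ->]. apply Rabs_pos. Qed.

Lemma tnorm_lip x y : tnorm x <= tnorm y + Rabs (x - y).
Proof.
  destruct (tnorm_att y) as [z Hz].
  eapply Rle_trans. apply (tnorm_le x z).
  rewrite Hz. replace (x - IZR z) with ((x - y) + (y - IZR z)) by ring.
  eapply Rle_trans. apply Rabs_triang. lra.
Qed.

Lemma tnorm_abs x : tnorm x <= Rabs x.
Proof. pose proof (tnorm_le x 0). rewrite Rminus_0_r in H. exact H. Qed.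

Lemma tnorm_add x y : tnorm (x + y) <= tnorm x + tnorm y.
Proof.
  destruct (tnorm_att x) as [a Ha]. destruct (tnorm_att y) as [b Hb].
  eapply Rle_trans. apply (tnorm_le _ (a + b)).
  rewrite plus_IZR, Ha, Hb.
  replace (x + y - (IZR a + IZR b)) with ((x - IZR a) + (y - IZR b)) by ring.
  apply Rabs_triang.
Qed.

Lemma tnorm_opp x : tnorm (- x) = tnorm x.
Proof.
  assert (forall y, tnorm (- y) <= tnorm y).
  { intro y. destruct (tnorm_att y) as [a Ha].
    eapply Rle_trans. apply (tnorm_le _ (- a)). rewrite opp_IZR, Ha.
    replace (- y - - IZR a) with (- (y - IZR a)) by ring. rewrite Rabs_Ropp. lra. }
  apply Rle_antisym; auto. rewrite <- (Ropp_involutive x) at 1. auto.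
Qed.

Lemma tnorm_Z z : tnorm (IZR z) = 0.
Proof.
  apply Rle_antisym; [|apply tnorm_ge0].
  eapply Rle_trans. apply (tnorm_le _ z). rewrite Rminus_diag, Rabs_R0; lra.
Qed.

Lemma tnorm_shift x z : tnorm (x + IZR z) = tnorm x.
Proof.
  apply Rle_antisym.
  - eapply Rle_trans. apply tnorm_add. rewrite tnorm_Z; lra.
  - replace x with ((x + IZR z) + IZR (- z)) at 1 by (rewrite opp_IZR; ring).
    eapply Rle_trans. apply tnorm_add. rewrite tnorm_Z; lra.
Qed.

Lemma tnorm_nat x n : tnorm (INR n * x) <= INR n * tnorm x.
Proof.
  induction n.
  - simpl. rewrite Rmult_0_l. rewrite (tnorm_Z 0). lra.
  - rewrite S_INR. replace ((INR n + 1) * x) with (INR n * x + x) by ring.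
    eapply Rle_trans. apply tnorm_add. lra.
Qed.

Definition goodc (c : R) (M : nat) (x : R) :=
  exists s : nat, (1 <= s <= M)%nat /\ INR s * tnorm (INR s * x) < c.
Definition covered (L : list (R*R)) (x : R) :=
  exists p, In p L /\ fst p < x < snd p.
Definition sumlen (L : list (R*R)) : R :=
  fold_right (fun p acc => snd p - fst p + acc) 0 L.
Definition ordered (L : list (R*R)) := forall p, In p L -> fst p <= snd p.
Definition betw a b x := (a <= x <= b) \/ (b <= x <= a).
Definition unimod (u1 : Z) (v1 : nat) (u2 : Z) (v2 : nat) :=
  (1 <= v1)%nat /\ (1 <= v2)%nat /\ Rabs (IZR u1 * INR v2 - IZR u2 * INR v1) = 1.
Definition pt (u : Z) (v : nat) := IZR u / INR v.

Lemma div_nonneg a b : 0 <= a -> 0 < b -> 0 <= a / b.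
Proof. intros. unfold Rdiv. apply Rmult_le_pos; [auto|left; apply Rinv_0_lt_compat; auto]. Qed.

Lemma sumlen_app L L' : sumlen (L ++ L') = sumlen L + sumlen L'.
Proof. induction L; simpl; [ring|]. rewrite IHL; ring. Qed.

Lemma ordered_app L L' : ordered L -> ordered L' -> ordered (L ++ L').
Proof. intros H H' p Hp. apply in_app_or in Hp. destruct Hp; auto. Qed.

Lemma covered_app_l L L' x : covered L x -> covered (L ++ L') x.
Proof. intros [p [H1 H2]]. exists p. split; auto. apply in_or_app; auto. Qed.
Lemma covered_app_r L L' x : covered L' x -> covered (L ++ L') x.
Proof. intros [p [H1 H2]]. exists p. split; auto. apply in_or_app; auto. Qed.

Lemma goodc_mono c M M' x : (M <= M')%nat -> goodc c M x -> goodc c M' x.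
Proof. intros H [s [Hs Hs']]. exists s. split; [lia|auto]. Qed.

Lemma INR_ge1 n : (1 <= n)%nat -> 1 <= INR n.
Proof. intro H. apply le_INR in H. simpl in H. exact H. Qed.

Lemma pt_dist u1 v1 u2 v2 : unimod u1 v1 u2 v2 ->
  Rabs (pt u1 v1 - pt u2 v2) = 1 / (INR v1 * INR v2).
Proof.
  intros [H1 [H2 H3]]. apply INR_ge1 in H1. apply INR_ge1 in H2. unfold pt.
  replace (IZR u1 / INR v1 - IZR u2 / INR v2) with
    ((IZR u1 * INR v2 - IZR u2 * INR v1) * / (INR v1 * INR v2)) by (field; repeat split; lra).
  rewrite Rabs_mult, H3, Rabs_inv, Rabs_right; [field; lra|].
  apply Rle_ge. apply Rmult_le_pos; lra.
Qed.

Lemma goodc_pt c M u v : 0 < c -> (1 <= v <= M)%nat -> goodc c M (pt u v).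
Proof.
  intros Hc Hv. exists v. split; auto. unfold pt.
  assert (1 <= INR v) by (apply INR_ge1; lia).
  replace (INR v * (IZR u / INR v)) with (IZR u) by (field; repeat split; lra).
  rewrite tnorm_Z. lra.
Qed.

Lemma betw_split a m b x : betw a b m -> betw a b x -> betw a m x \/ betw m b x.
Proof. unfold betw. intros. lra. Qed.

Lemma mediant_betw u1 v1 u v : (1 <= v1)%nat -> (1 <= v)%nat ->
  betw (pt u1 v1) (pt u v) (pt (u1 + u) (v1 + v)).
Proof.
  intros H1 H2. apply INR_ge1 in H1. apply INR_ge1 in H2. unfold pt, betw.
  rewrite plus_IZR, plus_INR.
  set (a := IZR u1) in *. set (b := INR v1) in *. set (c0 := IZR u) in *. set (d := INR v) in *.
  assert (E1 : (a + c0) / (b + d) - a / b = (b * c0 - a * d) / (b * (b + d))) by (field; repeat split; lra).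
  assert (E2 : c0 / d - (a + c0) / (b + d) = (b * c0 - a * d) / (d * (b + d))) by (field; repeat split; lra).
  assert (P1 : 0 < b * (b + d)) by (apply Rmult_lt_0_compat; lra).
  assert (P2 : 0 < d * (b + d)) by (apply Rmult_lt_0_compat; lra).
  destruct (Rle_dec 0 (b * c0 - a * d)).
  - left. split.
    + assert (0 <= (b * c0 - a * d) / (b * (b + d))) by (apply div_nonneg; lra). lra.
    + assert (0 <= (b * c0 - a * d) / (d * (b + d))) by (apply div_nonneg; lra). lra.
  - right. split.
    + assert (0 <= - (b * c0 - a * d) / (d * (b + d))) by (apply div_nonneg; lra).
      unfold Rdiv in *. rewrite Ropp_mult_distr_l_reverse in H. lra.
    + assert (0 <= - (b * c0 - a * d) / (b * (b + d))) by (apply div_nonneg; lra).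
      unfold Rdiv in *. rewrite Ropp_mult_distr_l_reverse in H. lra.
Qed.

Lemma unimod_chain u1 v1 u v i : unimod u1 v1 u v ->
  unimod u1 v1 (Z.of_nat i * u1 + u) (i * v1 + v).
Proof.
  intros [H1 [H2 H3]]. split; [auto|split; [lia|]].
  rewrite plus_IZR, mult_IZR, <- INR_IZR_INZ, plus_INR, mult_INR.
  replace (IZR u1 * (INR i * INR v1 + INR v) - (INR i * IZR u1 + IZR u) * INR v1)
    with (IZR u1 * INR v - IZR u * INR v1) by ring. auto.
Qed.

Lemma unimod_piece u1 v1 u v i : unimod u1 v1 u v ->
  unimod (Z.of_nat (S i) * u1 + u) (S i * v1 + v) (Z.of_nat i * u1 + u) (i * v1 + v).
Proof.
  intros [H1 [H2 H3]]. split; [lia|split; [lia|]].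
  rewrite !plus_IZR, !mult_IZR, <- !INR_IZR_INZ, !plus_INR, !mult_INR, S_INR.
  match goal with |- Rabs ?X = _ => transitivity (Rabs (IZR u1 * INR v - IZR u * INR v1)) end.
  - f_equal. ring.
  - auto.
Qed.

Lemma unimod_sym u1 v1 u2 v2 : unimod u1 v1 u2 v2 -> unimod u2 v2 u1 v1.
Proof.
  intros [H1 [H2 H3]]. split; [auto|split; [auto|]].
  match goal with |- Rabs ?X = _ => transitivity (Rabs (- (IZR u1 * INR v2 - IZR u2 * INR v1))) end.
  - f_equal. ring.
  - rewrite Rabs_Ropp; auto.
Qed.

Definition th (J : nat) := INR J / (INR J + 1).

Definition RecP c J d := forall u1 v1 u2 v2, unimod u1 v1 u2 v2 ->
  exists L, ordered L /\ sumlen L <= th J ^ d / (INR v1 * INR v2) /\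
  forall x, betw (pt u1 v1) (pt u2 v2) x ->
    covered L x \/ goodc c ((J + 1) ^ d * Nat.max v1 v2) x.

Lemma th_pos J : 0 <= th J.
Proof. unfold th. apply div_nonneg; [apply pos_INR|]. pose proof (pos_INR J); lra. Qed.

Lemma chain c J d (IH : RecP c J d) u1 v1 : forall i u v, unimod u1 v1 u v ->
  exists L, ordered L /\
   sumlen L <= th J ^ d * (1 / (INR v1 * INR v) - 1 / (INR v1 * INR (i * v1 + v))) /\
   forall x, betw (pt u1 v1) (pt u v) x ->
     betw (pt u1 v1) (pt (Z.of_nat i * u1 + u) (i * v1 + v)) x \/ covered L x \/
     goodc c ((J + 1) ^ d * (i * v1 + v)) x.
Proof.
  induction i; intros u v Hu.
  - exists nil. split; [intros p Hp; destruct Hp|]. split.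
    + simpl. rewrite Rminus_diag, Rmult_0_r. lra.
    + intros x Hx. left. simpl. exact Hx.
  - destruct (IHi u v Hu) as [L [HLo [HLs HLc]]].
    destruct (IH _ _ _ _ (unimod_piece u1 v1 u v i Hu)) as [L' [HLo' [HLs' HLc']]].
    exists (L ++ L'). split; [apply ordered_app; auto|]. split.
    + rewrite sumlen_app.
      destruct Hu as [H1 [H2 _]]. apply INR_ge1 in H1. apply INR_ge1 in H2.
      rewrite !plus_INR, !mult_INR, !S_INR in *.
      assert (E : th J ^ d * (1 / (INR v1 * INR v) - 1 / (INR v1 * (INR i * INR v1 + INR v)))
        + th J ^ d / (((INR i + 1) * INR v1 + INR v) * (INR i * INR v1 + INR v))
        = th J ^ d * (1 / (INR v1 * INR v) - 1 / (INR v1 * ((INR i + 1) * INR v1 + INR v)))).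
      { pose proof (pos_INR i). field. repeat split; nra. }
      lra.
    + intros x Hx. destruct (HLc x Hx) as [Hb|[Hc'|Hg]].
      * assert (Hm : betw (pt u1 v1) (pt (Z.of_nat i * u1 + u) (i * v1 + v))
                      (pt (Z.of_nat (S i) * u1 + u) (S i * v1 + v))).
        { replace (Z.of_nat (S i) * u1 + u)%Z with (u1 + (Z.of_nat i * u1 + u))%Z by lia.
          replace (S i * v1 + v)%nat with (v1 + (i * v1 + v))%nat by lia.
          destruct Hu as [H1 [H2 _]]. apply mediant_betw; lia. }
        destruct (betw_split _ _ _ _ Hm Hb) as [Hb'|Hb'].
        -- left. exact Hb'.
        -- assert (Hb'' : betw (pt (Z.of_nat (S i) * u1 + u) (S i * v1 + v))
                              (pt (Z.of_nat i * u1 + u) (i * v1 + v)) x).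
           { unfold betw in *. lra. }
           destruct (HLc' x Hb'') as [Hc2|Hg2].
           ++ right; left. apply covered_app_r; auto.
           ++ right; right. eapply goodc_mono; [|exact Hg2].
              apply Nat.mul_le_mono_l. lia.
      * right; left. apply covered_app_l; auto.
      * right; right. eapply goodc_mono; [|exact Hg]. apply Nat.mul_le_mono_l. lia.
Qed.

Lemma pow_ge1 J n : (1 <= (J + 1) ^ n)%nat.
Proof. induction n; simpl; lia. Qed.

Lemma betw_abs a b x : betw a b x -> Rabs (x - a) <= Rabs (a - b).
Proof.
  unfold betw. intro H. unfold Rabs. destruct (Rcase_abs (x - a)), (Rcase_abs (a - b)); lra.
Qed.

Lemma rec0 c J (Hc : 0 < c) : RecP c J 0.
Proof.
  intros u1 v1 u2 v2 Hu.
  exists ((Rmin (pt u1 v1) (pt u2 v2), Rmax (pt u1 v1) (pt u2 v2)) :: nil).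
  split; [|split].
  - intros p [<-|[]]. simpl. unfold Rmin, Rmax; destruct (Rle_dec (pt u1 v1) (pt u2 v2)); lra.
  - simpl. rewrite <- (pt_dist _ _ _ _ Hu).
    unfold Rmin, Rmax, Rabs. destruct (Rle_dec (pt u1 v1) (pt u2 v2)), (Rcase_abs (pt u1 v1 - pt u2 v2)); lra.
  - intros x Hx. destruct Hu as [H1 [H2 _]].
    destruct (Req_dec x (pt u1 v1)) as [E|E].
    { right. subst. apply goodc_pt; auto. simpl. lia. }
    destruct (Req_dec x (pt u2 v2)) as [E'|E'].
    { right. subst. apply goodc_pt; auto. simpl. lia. }
    left. eexists. split; [left; reflexivity|]. simpl.
    unfold betw, Rmin, Rmax in *. destruct (Rle_dec (pt u1 v1) (pt u2 v2)); lra.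
Qed.

Lemma rec_step_ord c J d (Hc : 0 < c) (HJ : (1 <= J)%nat) (HJc : 1 <= INR J * c)
  (IH : RecP c J d) u1 v1 u2 v2 : unimod u1 v1 u2 v2 -> (v1 <= v2)%nat ->
  exists L, ordered L /\ sumlen L <= th J ^ S d / (INR v1 * INR v2) /\
  forall x, betw (pt u1 v1) (pt u2 v2) x ->
    covered L x \/ goodc c ((J + 1) ^ S d * Nat.max v1 v2) x.
Proof.
  intros Hu Hle.
  destruct (chain c J d IH u1 v1 J u2 v2 Hu) as [L [HLo [HLs HLc]]].
  assert (Hu' := Hu). destruct Hu' as [H1 [H2 _]].
  assert (Ha := INR_ge1 _ H1). assert (Hb := INR_ge1 _ H2). assert (Hj := INR_ge1 _ HJ).
  apply le_INR in Hle.
  exists L. split; [auto|split].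
  - eapply Rle_trans; [exact HLs|].
    rewrite plus_INR, mult_INR.
    set (a := INR v1) in *. set (b := INR v2) in *. set (j := INR J) in *.
    assert (Key : 1 / (a * b) - 1 / (a * (j * a + b)) <= th J / (a * b)).
    { assert (E : th J / (a * b) - (1 / (a * b) - 1 / (a * (j * a + b)))
                 = j * (b - a) / ((j + 1) * a * b * (j * a + b))).
      { unfold th. fold j. field. repeat split; nra. }
      assert (0 <= j * (b - a) / ((j + 1) * a * b * (j * a + b))).
      { apply div_nonneg; [nra|]. apply Rmult_lt_0_compat; [|nra].
        apply Rmult_lt_0_compat; [|lra]. apply Rmult_lt_0_compat; lra. }
      lra. }
    simpl. pose proof (pow_le _ d (th_pos J)).
    replace (th J * th J ^ d / (a * b)) with (th J ^ d * (th J / (a * b))) by (field; nra).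
    apply Rmult_le_compat_l; auto.
  - intros x Hx. pose proof (pow_ge1 J d) as HP.
    destruct (HLc x Hx) as [Hb'|[Hc'|Hg]].
    + right. exists v1. split.
      { split; [auto|]. simpl. nia. }
      pose proof (betw_abs _ _ _ Hb') as Hd.
      rewrite (pt_dist _ _ _ _ (unimod_chain u1 v1 u2 v2 J Hu)) in Hd.
      rewrite plus_INR, mult_INR in Hd.
      pose proof (tnorm_le (INR v1 * x) u1) as Ht.
      replace (INR v1 * x - IZR u1) with (INR v1 * (x - pt u1 v1)) in Ht
        by (unfold pt; field; lra).
      rewrite Rabs_mult, (Rabs_right (INR v1)) in Ht by lra.
      set (a := INR v1) in *. set (b := INR v2) in *. set (j := INR J) in *.
      assert (S1 : a * tnorm (a * x) <= a / (j * a + b)).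
      { replace (a / (j * a + b)) with (a * a * (1 / (a * (j * a + b)))) by (field; nra).
        assert (0 <= tnorm (a * x)) by apply tnorm_ge0. nra. }
      assert (S2 : a / (j * a + b) < 1 / j).
      { assert (E : 1 / j - a / (j * a + b) = b / (j * (j * a + b))) by (field; nra).
        assert (0 < b / (j * (j * a + b))).
        { unfold Rdiv. apply Rmult_lt_0_compat; [lra|]. apply Rinv_0_lt_compat. nra. }
        lra. }
      assert (S3 : 1 / j <= c).
      { replace c with ((1 / j) * (j * c)) by (field; lra).
        rewrite <- (Rmult_1_r (1 / j)) at 1. apply Rmult_le_compat_l; [|lra].
        apply div_nonneg; lra. }
      lra.
    + left. auto.
    + right. eapply goodc_mono; [|exact Hg].
      assert (Hle' : (v1 <= v2)%nat) by (apply INR_le; auto).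
      rewrite Nat.max_r by auto. simpl. nia.
Qed.

Lemma rec c J (Hc : 0 < c) (HJ : (1 <= J)%nat) (HJc : 1 <= INR J * c) : forall d, RecP c J d.
Proof.
  induction d; [apply rec0; auto|].
  intros u1 v1 u2 v2 Hu.
  destruct (Nat.le_ge_cases v1 v2) as [Hle|Hge].
  - apply rec_step_ord; auto.
  - destruct (rec_step_ord c J d Hc HJ HJc IHd u2 v2 u1 v1 (unimod_sym _ _ _ _ Hu) Hge)
      as [L [HLo [HLs HLc]]].
    exists L. split; [auto|split].
    + rewrite Rmult_comm; auto.
    + intros x Hx. rewrite Nat.max_comm. apply HLc. unfold betw in *; lra.
Qed.

Lemma sumlen_nonneg L : ordered L -> 0 <= sumlen L.
Proof.
  induction L; simpl; intros H; [lra|].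
  assert (fst a <= snd a) by (apply H; left; auto).
  assert (0 <= sumlen L) by (apply IHL; intros p Hp; apply H; right; auto). lra.
Qed.

Lemma nth_sum_le : forall L, ordered L -> forall m,
  sum_f_R0 (fun k => snd (nth k L (0,0)) - fst (nth k L (0,0))) m <= sumlen L.
Proof.
  induction L as [|x L IH]; intros HL m.
  - simpl. induction m; simpl; [lra|]. destruct m; simpl in *; lra.
  - assert (HL' : ordered L) by (intros p Hp; apply HL; right; auto).
    assert (Hx : fst x <= snd x) by (apply HL; left; auto).
    destruct m.
    + simpl. pose proof (sumlen_nonneg L HL'). lra.
    + rewrite decomp_sum by lia. simpl.
      specialize (IH HL' m). simpl in IH. lra.
Qed.

Definition Cf (B : nat -> list (R*R)) (N : nat) :=
  concat (map (fun n => (0,0) :: B n) (seq 0 (S N))).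

Lemma Cf_S B N : Cf B (S N) = Cf B N ++ ((0,0) :: B (S N)).
Proof.
  unfold Cf. rewrite (seq_S (S N) 0), map_app, concat_app. simpl. rewrite app_nil_r. auto.
Qed.

Lemma Cf_len B N : (S N <= length (Cf B N))%nat.
Proof.
  induction N.
  - unfold Cf. simpl. apply le_n_S, Nat.le_0_l.
  - rewrite Cf_S, length_app. cbn [length]. lia.
Qed.

Lemma Cf_prefix B m m' : (m <= m')%nat -> exists t, Cf B m' = Cf B m ++ t.
Proof.
  induction 1.
  - exists nil. rewrite app_nil_r. auto.
  - destruct IHle as [t Ht]. exists (t ++ ((0,0) :: B (S m0))).
    rewrite Cf_S, Ht, app_assoc. auto.
Qed.

Lemma Cf_nth B k N : (k <= N)%nat -> nth k (Cf B N) (0,0) = nth k (Cf B k) (0,0).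
Proof.
  intro H. destruct (Cf_prefix B k N H) as [t ->]. apply app_nth1.
  pose proof (Cf_len B k). lia.
Qed.

Lemma Cf_sumlen B N : sumlen (Cf B N) = sum_f_R0 (fun n => sumlen (B n)) N.
Proof.
  induction N.
  - unfold Cf. simpl. rewrite app_nil_r. ring.
  - rewrite Cf_S, sumlen_app, IHN. simpl. ring.
Qed.

Lemma Cf_In B N p : In p (Cf B N) -> p = (0,0) \/ exists n, In p (B n).
Proof.
  unfold Cf. rewrite in_concat. intros [l [Hl Hp]].
  apply in_map_iff in Hl. destruct Hl as [n [<- _]].
  destruct Hp as [<-|Hp]; [left; auto|right; exists n; auto].
Qed.

Lemma flatten (B : nat -> list (R*R)) (eps : R) (N : R -> Prop) :
  (forall n, ordered (B n)) ->
  (forall m, sum_f_R0 (fun n => sumlen (B n)) m <= eps) ->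
  (forall x, N x -> exists n, covered (B n) x) ->
  exists a b : nat -> R,
      (forall k, a k <= b k) /\
      (forall x, N x -> exists k, a k < x < b k) /\
      (forall m, sum_f_R0 (fun k => b k - a k) m <= eps).
Proof.
  intros Hord Hsum Hcov.
  exists (fun k => fst (nth k (Cf B k) (0,0))), (fun k => snd (nth k (Cf B k) (0,0))).
  assert (HordC : forall M, ordered (Cf B M)).
  { intros M p Hp. destruct (Cf_In B M p Hp) as [->|[n Hn]]; [simpl; lra|]. apply (Hord n); auto. }
  split; [|split].
  - intro k. apply (HordC k). apply nth_In. pose proof (Cf_len B k). lia.
  - intros x Hx. destruct (Hcov x Hx) as [n [p [Hp Hpx]]].
    assert (HpC : In p (Cf B n)).
    { unfold Cf. apply in_concat. exists ((0,0) :: B n). split; [|right; auto].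
      apply (in_map (fun n => (0,0) :: B n)). apply in_seq. lia. }
    destruct (In_nth (Cf B n) p (0,0) HpC) as [idx [Hidx Hnth]].
    exists idx.
    assert (E : nth idx (Cf B idx) (0,0) = p).
    { destruct (Nat.le_gt_cases idx n).
      - rewrite <- (Cf_nth B idx n); auto.
      - destruct (Cf_prefix B n idx ltac:(lia)) as [t ->]. rewrite app_nth1; auto. }
    rewrite E. auto.
  - intro m. eapply Rle_trans; [|apply (Hsum m)]. rewrite <- Cf_sumlen.
    rewrite (sum_eq _ (fun k => snd (nth k (Cf B m) (0,0)) - fst (nth k (Cf B m) (0,0)))).
    + apply nth_sum_le. apply HordC.
    + intros i Hi. rewrite (Cf_nth B i m Hi). auto.
Qed.

Definition ck (k : nat) : R := 1 / (6 * INR k ^ 3).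
Definition tgt (k : nat) : R := (1/2) ^ k / (2 * INR k + 1).

Lemma goodc_shift c M x z : goodc c M (x + IZR z) <-> goodc c M x.
Proof.
  assert (E : forall s : nat, INR s * (x + IZR z) = INR s * x + IZR (Z.of_nat s * z)).
  { intro s. rewrite mult_IZR, <- INR_IZR_INZ. ring. }
  split; intros [s [Hs Hs']]; exists s; split; auto.
  - rewrite E, tnorm_shift in Hs'. auto.
  - rewrite E, tnorm_shift. auto.
Qed.

Lemma cover01 k : (1 <= k)%nat -> exists M L, ordered L /\ sumlen L <= tgt k /\
  forall g, 0 <= g <= 1 -> covered L g \/ goodc (ck k) M g.
Proof.
  intro Hk. assert (Hk' := INR_ge1 _ Hk).
  set (J := (6 * k ^ 3)%nat).
  assert (HJ : (1 <= J)%nat).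
  { unfold J. simpl. nia. }
  assert (HJR : INR J = 6 * INR k ^ 3) by (unfold J; rewrite mult_INR, pow_INR; simpl; ring).
  assert (Hk3 : 1 <= INR k ^ 3) by (simpl; nra).
  assert (Hc : 0 < ck k) by (unfold ck; apply Rdiv_lt_0_compat; lra).
  assert (HJc : 1 <= INR J * ck k) by (rewrite HJR; unfold ck; right; field; lra).
  assert (Ht : 0 < tgt k).
  { unfold tgt. apply Rdiv_lt_0_compat; [apply pow_lt; lra|]. pose proof (pos_INR k); lra. }
  assert (Hth : Rabs (th J) < 1).
  { unfold th. pose proof (pos_INR J). rewrite Rabs_right.
    - apply (Rmult_lt_reg_r (INR J + 1)); [lra|]. unfold Rdiv. rewrite Rmult_assoc, Rinv_l; lra.
    - apply Rle_ge, div_nonneg; lra. }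
  destruct (pow_lt_1_zero _ Hth _ Ht) as [d Hd]. specialize (Hd d (le_n d)).
  destruct (rec _ _ Hc HJ HJc d 0%Z 1%nat 1%Z 1%nat) as [L [HLo [HLs HLc]]].
  { split; [lia|split; [lia|]]. simpl. unfold Rabs; destruct Rcase_abs; lra. }
  exists ((J + 1) ^ d * Nat.max 1 1)%nat, L. split; [auto|split].
  - eapply Rle_trans; [exact HLs|]. simpl. rewrite Rmult_1_r.
    unfold Rdiv. rewrite Rinv_1, Rmult_1_r. left. eapply Rle_lt_trans; [apply Rle_abs|exact Hd].
  - intros g Hg. apply HLc. left. unfold pt. simpl. lra.
Qed.

Lemma MLex k : exists ML : nat * list (R*R), (1 <= k)%nat ->
  ordered (snd ML) /\ sumlen (snd ML) <= tgt k /\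
  forall g, 0 <= g <= 1 -> covered (snd ML) g \/ goodc (ck k) (fst ML) g.
Proof.
  destruct (Nat.le_gt_cases 1 k) as [H|H].
  - destruct (cover01 k H) as [M [L HL]]. exists (M, L). intros _. exact HL.
  - exists (0%nat, nil). intro. lia.
Qed.

Definition MLf (k : nat) := proj1_sig (constructive_indefinite_description _ (MLex k)).
Definition Mf k := fst (MLf k).
Definition Lf k := snd (MLf k).

Lemma MLf_spec k : (1 <= k)%nat ->
  ordered (Lf k) /\ sumlen (Lf k) <= tgt k /\
  forall g, 0 <= g <= 1 -> covered (Lf k) g \/ goodc (ck k) (Mf k) g.
Proof. unfold Lf, Mf, MLf. destruct (constructive_indefinite_description _ (MLex k)). simpl. auto. Qed.

Definition Gs (b : R) := exists K : nat, forall k : nat, (K <= k)%nat -> (1 <= k)%nat ->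
  goodc (ck k) (Mf k) (INR k * b).

Definition shiftp (t k : R) (p : R * R) := ((fst p + t) / k, (snd p + t) / k).

Definition block (L0 n : nat) : list (R*R) :=
  flat_map (fun j => map (shiftp (INR j - INR (L0 + n) * INR n) (INR (L0 + n))) (Lf (L0 + n)))
    (seq 0 ((L0 + n) * (2 * n + 1))).

Lemma sumlen_shift L t k : k <> 0 -> sumlen (map (shiftp t k) L) = sumlen L / k.
Proof. intro Hk. induction L; simpl; [field; auto|]. rewrite IHL. unfold shiftp; simpl. field. auto. Qed.

Lemma ordered_shift L t k : 0 < k -> ordered L -> ordered (map (shiftp t k) L).
Proof.
  intros Hk HL p Hp. apply in_map_iff in Hp. destruct Hp as [q [<- Hq]].
  unfold shiftp; simpl. apply HL in Hq. unfold Rdiv. apply Rmult_le_compat_r.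
  - left; apply Rinv_0_lt_compat; auto.
  - lra.
Qed.

Lemma sumlen_flat_map (f : nat -> list (R*R)) l S :
  (forall j, sumlen (f j) = S) -> sumlen (flat_map f l) = INR (length l) * S.
Proof.
  intro H. induction l; simpl; [ring|]. rewrite sumlen_app, IHl, H.
  destruct (length l); simpl; ring.
Qed.

Lemma block_ord L0 n : (1 <= L0 + n)%nat -> ordered (block L0 n).
Proof.
  intros Hk p Hp. unfold block in Hp. apply in_flat_map in Hp. destruct Hp as [j [_ Hj]].
  apply (ordered_shift (Lf (L0 + n)) (INR j - INR (L0 + n) * INR n) (INR (L0 + n))); auto.
  - apply INR_ge1 in Hk. lra.
  - apply MLf_spec; auto.
Qed.

Lemma block_sum L0 n : (1 <= L0 + n)%nat -> sumlen (block L0 n) <= (1/2) ^ (L0 + n).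
Proof.
  intro Hk. assert (HkR := INR_ge1 _ Hk). unfold block.
  rewrite (sumlen_flat_map _ _ (sumlen (Lf (L0 + n)) / INR (L0 + n))).
  2: { intro j. apply sumlen_shift. lra. }
  rewrite length_seq.
  destruct (MLf_spec _ Hk) as [_ [Hs _]]. unfold tgt in Hs.
  rewrite mult_INR, (plus_INR (2 * n) 1), mult_INR. simpl (INR 2). simpl (INR 1).
  assert (Hn : INR n <= INR (L0 + n)) by (apply le_INR; lia).
  set (K := INR (L0 + n)) in *.
  pose proof (pos_INR n).
  replace (K * ((1 + 1) * INR n + 1) * (sumlen (Lf (L0 + n)) / K))
    with ((2 * INR n + 1) * sumlen (Lf (L0 + n))) by (simpl; field; lra).
  assert (Hp : 0 <= (1/2) ^ (L0 + n)) by (apply pow_le; lra).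
  assert (E : (1/2) ^ (L0 + n) = (2 * K + 1) * ((1 / 2) ^ (L0 + n) / (2 * K + 1))) by (field; lra).
  rewrite E.
  assert (0 <= sumlen (Lf (L0 + n))) by (apply sumlen_nonneg; apply MLf_spec; auto).
  apply Rle_trans with ((2 * K + 1) * sumlen (Lf (L0 + n))).
  - apply Rmult_le_compat_r; lra.
  - apply Rmult_le_compat_l; lra.
Qed.

Lemma block_cover L0 n b : (1 <= L0 + n)%nat -> - INR n <= b < INR n + 1 ->
  ~ goodc (ck (L0 + n)) (Mf (L0 + n)) (INR (L0 + n) * b) -> covered (block L0 n) b.
Proof.
  intros Hk Hb Hng.
  set (k := (L0 + n)%nat) in *.
  assert (HkR := INR_ge1 _ Hk).
  set (g := INR k * b).
  set (z := Int_part g).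
  destruct (base_Int_part g) as [Hz1 Hz2]. fold z in Hz1, Hz2.
  destruct (MLf_spec k Hk) as [_ [_ Hsp]].
  destruct (Hsp (g - IZR z)) as [[p [Hp Hpx]]|Hg]; [lra| |].
  2: { exfalso. apply Hng. fold g. apply (goodc_shift _ _ _ (- z)).
       rewrite opp_IZR. exact Hg. }
  set (kz := Z.of_nat k). set (nz := Z.of_nat n).
  assert (Ek : INR k = IZR kz) by apply INR_IZR_INZ.
  assert (En : INR n = IZR nz) by apply INR_IZR_INZ.
  assert (Hlo : IZR (- (kz * nz) - 1) < IZR z).
  { rewrite minus_IZR, opp_IZR, mult_IZR, <- Ek, <- En. unfold g in *. nra. }
  assert (Hhi : IZR z < IZR (kz * (nz + 1))).
  { rewrite mult_IZR, plus_IZR, <- Ek, <- En. unfold g in *. nra. }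
  apply lt_IZR in Hlo. apply lt_IZR in Hhi.
  set (jz := (z + kz * nz)%Z).
  assert (Hj0 : (0 <= jz)%Z) by lia.
  set (j := Z.to_nat jz).
  assert (Ej : INR j = IZR jz) by (unfold j; rewrite INR_IZR_INZ, Z2Nat.id; auto).
  exists (shiftp (INR j - INR k * INR n) (INR k) p). split.
  - unfold block. fold k. apply in_flat_map. exists j. split.
    + apply in_seq. unfold j. split; [lia|].
      assert (Z.to_nat jz < k * (2 * n + 1))%nat; [|lia].
      unfold jz, kz, nz in *. nia.
    + apply in_map. auto.
  - assert (Et : INR j - INR k * INR n = IZR z).
    { rewrite Ej. unfold jz. rewrite plus_IZR, mult_IZR, <- Ek, <- En. ring. }
    rewrite Et. unfold shiftp. simpl. unfold g in *.
    split; [apply (Rmult_lt_reg_r (INR k))|apply (Rmult_lt_reg_r (INR k))]; try lra;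
      unfold Rdiv; rewrite Rmult_assoc, Rinv_l; lra.
Qed.

Lemma gp_half m : sum_f_R0 (fun n => (1/2) ^ n) m <= 2.
Proof.
  pose proof (GP_finite (1/2) m) as H.
  assert (0 <= (1/2) ^ (m + 1)) by (apply pow_le; lra). lra.
Qed.

Lemma Gs_full : full_measure Gs.
Proof.
  intros eps Heps.
  assert (Hh : Rabs (1/2) < 1) by (rewrite Rabs_right; lra).
  destruct (pow_lt_1_zero _ Hh (eps / 2) ltac:(lra)) as [N HN].
  set (L0 := S N).
  assert (HL0 : (1/2) ^ L0 < eps / 2).
  { specialize (HN L0 ltac:(unfold L0; lia)). rewrite Rabs_right in HN; auto.
    apply Rle_ge, pow_le; lra. }
  apply (flatten (block L0)).
  - intro n. apply block_ord. unfold L0; lia.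
  - intro m. apply Rle_trans with (sum_f_R0 (fun n => (1/2) ^ n * (1/2) ^ L0) m).
    + apply sum_Rle. intros n _. rewrite Rmult_comm, <- pow_add. apply block_sum. unfold L0; lia.
    + rewrite <- (scal_sum (fun n => (1/2) ^ n) m ((1/2) ^ L0)) .
      rewrite Rmult_comm. pose proof (gp_half m).
      assert (0 <= (1/2) ^ L0) by (apply pow_le; lra).
      apply Rle_trans with (2 * (1/2) ^ L0); [|lra].
      apply Rmult_le_compat_r; auto.
  - intros x Hx.
    destruct (archimed (Rabs x)) as [Hu _].
    set (n0 := Z.to_nat (up (Rabs x))).
    assert (Hn0 : Rabs x < INR n0).
    { unfold n0. rewrite INR_IZR_INZ, Z2Nat.id; auto.
      apply le_IZR. pose proof (Rabs_pos x). lra. }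
    assert (Hk : exists k, (L0 + n0 <= k)%nat /\ (1 <= k)%nat /\
                   ~ goodc (ck k) (Mf k) (INR k * x)).
    { apply NNPP. intro Hc. apply Hx. exists (L0 + n0)%nat. intros k H1 H2.
      apply NNPP. intro Hc'. apply Hc. exists k. auto. }
    destruct Hk as [k [H1 [H2 H3]]].
    exists (k - L0)%nat.
    replace k with (L0 + (k - L0))%nat in H2, H3 by lia.
    apply block_cover; auto.
    assert (INR n0 <= INR (k - L0)) by (apply le_INR; lia).
    unfold Rabs in Hn0. destruct (Rcase_abs x); lra.
Qed.

Lemma Gs_periodic : periodic Gs.
Proof.
  assert (E : forall k x, INR k * (x + 1) = INR k * x + IZR (Z.of_nat k)).
  { intros. rewrite <- INR_IZR_INZ. ring. }
  intro x. split; intros [K HK]; exists K; intros k H1 H2; specialize (HK k H1 H2).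
  - rewrite E. apply goodc_shift. auto.
  - rewrite E in HK. apply goodc_shift in HK. auto.
Qed.

Definition delta (k : nat) : R := 1 / (14 * INR k ^ 5 * (INR (Mf k) + 1) ^ 3).
Definition UU (K : nat) (a : R) := exists k, (K <= k)%nat /\ (1 <= k)%nat /\ tnorm (INR k * a) < delta k.
Definition P0s (a : R) := forall K, UU K a.

Lemma delta_pos k : (1 <= k)%nat -> 0 < delta k.
Proof.
  intro Hk. apply INR_ge1 in Hk. unfold delta. apply Rdiv_lt_0_compat; [lra|].
  pose proof (pos_INR (Mf k)).
  apply Rmult_lt_0_compat; [apply Rmult_lt_0_compat; [lra|apply pow_lt; lra]|apply pow_lt; lra].
Qed.

Lemma P0s_residual : residual P0s.
Proof.
  exists UU. split; [|split].
  - intros K x [k [H1 [H2 H3]]].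
    assert (HkR := INR_ge1 _ H2).
    exists ((delta k - tnorm (INR k * x)) / INR k). split.
    + apply Rdiv_lt_0_compat; lra.
    + intros y Hy. exists k. split; [auto|split; [auto|]].
      pose proof (tnorm_lip (INR k * y) (INR k * x)).
      replace (INR k * y - INR k * x) with (INR k * (y - x)) in H by ring.
      rewrite Rabs_mult, (Rabs_right (INR k)) in H by lra.
      assert (INR k * Rabs (y - x) < delta k - tnorm (INR k * x)).
      { apply (Rmult_lt_compat_l (INR k)) in Hy; [|lra].
        replace (INR k * ((delta k - tnorm (INR k * x)) / INR k)) with (delta k - tnorm (INR k * x)) in Hy
          by (field; lra). auto. }
      lra.
  - intros K x d Hd.
    destruct (archimed (1 / d)) as [Hu _].
    set (m := Z.to_nat (up (1 / d))).
    assert (Hm : 1 / d < INR m).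
    { unfold m. rewrite INR_IZR_INZ, Z2Nat.id; auto. apply le_IZR.
      assert (0 < 1 / d) by (apply Rdiv_lt_0_compat; lra). lra. }
    set (k := S (Nat.max K m)).
    assert (Hk1 : (1 <= k)%nat) by (unfold k; lia).
    assert (HkR := INR_ge1 _ Hk1).
    assert (Hkm : INR m <= INR k) by (apply le_INR; unfold k; lia).
    set (z := Int_part (INR k * x)).
    destruct (base_Int_part (INR k * x)) as [Hz1 Hz2]. fold z in Hz1, Hz2.
    exists (IZR z / INR k). split.
    + exists k. split; [unfold k; lia|split; auto].
      replace (INR k * (IZR z / INR k)) with (IZR z) by (field; lra).
      rewrite tnorm_Z. apply delta_pos; auto.
    + assert (E : IZR z / INR k - x = (IZR z - INR k * x) / INR k) by (field; lra).
      rewrite E. unfold Rdiv. rewrite Rabs_mult, Rabs_inv, (Rabs_right (INR k)) by lra.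
      assert (Rabs (IZR z - INR k * x) < 1) by (unfold Rabs; destruct Rcase_abs; lra).
      assert (1 / INR k < d).
      { assert (1 / d * d = 1) by (field; lra).
        apply (Rmult_lt_reg_r (INR k)); [lra|]. unfold Rdiv. rewrite Rmult_assoc, Rinv_l by lra.
        rewrite Rmult_1_r. nra. }
      assert (0 < / INR k) by (apply Rinv_0_lt_compat; lra).
      unfold Rdiv in *. nra.
  - intros x Hx K. auto.
Qed.

Lemma P0s_periodic : periodic P0s.
Proof.
  assert (E : forall k x, INR k * (x + 1) = INR k * x + IZR (Z.of_nat k)).
  { intros. rewrite <- INR_IZR_INZ. ring. }
  intro x. split; intros H K; destruct (H K) as [k [H1 [H2 H3]]]; exists k;
    (split; [auto|split; [auto|]]).
  - rewrite E, tnorm_shift. auto.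
  - rewrite E, tnorm_shift in H3. auto.
Qed.

Lemma key_bound (kR sR mR X a b : R) : 1 <= kR -> 1 <= sR -> sR <= mR -> 0 <= X ->
  X <= kR * (kR * sR) -> 0 <= a -> a <= 1 / (14 * kR ^ 5 * mR ^ 3) -> 0 <= b ->
  sR * b < 1 / (6 * kR ^ 3) ->
  sR * (3 * X ^ 2 + 3 * X * (kR * sR) + (kR * sR) ^ 2) * a + (2 * X + kR * sR) * b < 1 / kR.
Proof.
  intros Hk Hs Hsm HX HXb Ha Had Hb Hsb.
  set (Q := kR * sR) in *.
  assert (HQ : 1 <= Q) by (unfold Q; nra).
  assert (T1 : sR * (3 * X ^ 2 + 3 * X * Q + Q ^ 2) <= 7 * kR ^ 4 * mR ^ 3).
  { assert (A0 : X * X <= (kR * Q) * (kR * Q)) by (apply Rmult_le_compat; lra).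
    assert (A1 : X ^ 2 <= kR ^ 2 * Q ^ 2) by (simpl; nra).
    assert (A2' : X * Q <= (kR * Q) * Q) by (apply Rmult_le_compat; lra).
    assert (A2'' : kR * Q * Q <= (kR * kR) * Q * Q) by (repeat apply Rmult_le_compat_r; nra).
    assert (A2 : X * Q <= kR ^ 2 * Q ^ 2) by (simpl; nra).
    assert (A3' : Q * Q <= (kR * kR) * (Q * Q)) by (rewrite <- (Rmult_1_l (Q * Q)) at 1; apply Rmult_le_compat_r; nra).
    assert (A3 : Q ^ 2 <= kR ^ 2 * Q ^ 2) by (simpl; nra).
    assert (A4 : 3 * X ^ 2 + 3 * X * Q + Q ^ 2 <= 7 * kR ^ 2 * Q ^ 2) by nra.
    assert (A5 : kR ^ 2 * Q ^ 2 = kR ^ 4 * sR ^ 2) by (unfold Q; ring).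
    assert (A6 : sR ^ 3 <= mR ^ 3) by (apply pow_incr; lra).
    assert (A7 : 0 <= kR ^ 4) by (apply pow_le; lra).
    assert (0 <= 3 * X ^ 2 + 3 * X * Q + Q ^ 2).
    { assert (0 <= X * Q) by (apply Rmult_le_pos; lra).
      assert (0 <= X * X) by (apply Rmult_le_pos; lra). simpl. nra. }
    replace (7 * kR ^ 4 * mR ^ 3) with (7 * kR ^ 4 * mR ^ 3) by ring.
    apply Rle_trans with (sR * (7 * kR ^ 2 * Q ^ 2)); [apply Rmult_le_compat_l; lra|].
    replace (sR * (7 * kR ^ 2 * Q ^ 2)) with (sR * (7 * (kR ^ 2 * Q ^ 2))) by ring.
    rewrite A5. replace (sR * (7 * (kR ^ 4 * sR ^ 2))) with (7 * kR ^ 4 * sR ^ 3) by ring.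
    apply Rmult_le_compat_l; [lra|auto]. }
  assert (Hm : 1 <= mR) by lra.
  assert (Pk5 : 0 < kR ^ 5) by (apply pow_lt; lra).
  assert (Pm3 : 0 < mR ^ 3) by (apply pow_lt; lra).
  assert (T1' : sR * (3 * X ^ 2 + 3 * X * Q + Q ^ 2) * a <= 1 / (2 * kR)).
  { apply Rle_trans with (7 * kR ^ 4 * mR ^ 3 * (1 / (14 * kR ^ 5 * mR ^ 3))).
    - assert (0 <= sR * (3 * X ^ 2 + 3 * X * Q + Q ^ 2)).
      { apply Rmult_le_pos; [lra|]. assert (0 <= X * Q) by (apply Rmult_le_pos; lra).
        assert (0 <= X * X) by (apply Rmult_le_pos; lra). simpl. nra. }
      apply Rle_trans with (sR * (3 * X ^ 2 + 3 * X * Q + Q ^ 2) * (1 / (14 * kR ^ 5 * mR ^ 3))).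
      + apply Rmult_le_compat_l; auto.
      + apply Rmult_le_compat_r; auto. apply div_nonneg; [lra|].
        apply Rmult_lt_0_compat; [|auto]. lra.
    - right. field. split; lra. }
  assert (T2 : (2 * X + Q) * b < 1 / (2 * kR)).
  { assert (B1 : 2 * X + Q <= 3 * kR * Q) by nra.
    apply Rle_lt_trans with (3 * kR * Q * b); [apply Rmult_le_compat_r; auto|].
    replace (3 * kR * Q * b) with (3 * kR ^ 2 * (sR * b)) by (unfold Q; ring).
    replace (1 / (2 * kR)) with (3 * kR ^ 2 * (1 / (6 * kR ^ 3))) by (field; lra).
    apply Rmult_lt_compat_l; auto. assert (0 < kR ^ 2) by (apply pow_lt; lra). lra. }
  replace (1 / kR) with (1 / (2 * kR) + 1 / (2 * kR)) by (field; lra). lra.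
Qed.

Theorem theorem3p6 :
  exists P0 G : R -> Prop,
    periodic P0 /\ residual P0 /\
    periodic G /\ full_measure G /\
    forall alpha beta : R, P0 alpha -> G beta ->
      repetition_property (cubic_seq alpha beta).
Proof.
  exists P0s, Gs. split; [apply P0s_periodic|]. split; [apply P0s_residual|].
  split; [apply Gs_periodic|]. split; [apply Gs_full|].
  intros al be HP [K HK] eps Heps r Hr.
  destruct (archimed (1 / eps)) as [Hu _].
  set (m := Z.to_nat (up (1 / eps))).
  assert (Hm : 1 / eps < INR m).
  { unfold m. rewrite INR_IZR_INZ, Z2Nat.id; auto. apply le_IZR.
    assert (0 < 1 / eps) by (apply Rdiv_lt_0_compat; lra). lra. }
  destruct (HP (Nat.max K (Nat.max r m))) as [k [Hk1 [Hk2 Hk3]]].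
  destruct (HK k ltac:(lia) Hk2) as [s [Hs Hs']].
  exists (k * s)%nat. split; [nia|].
  intros n Hn.
  assert (HkR := INR_ge1 _ Hk2).
  assert (HsR : 1 <= INR s) by (apply INR_ge1; lia).
  set (n1 := (s * (3 * n * n + 3 * n * (k * s) + (k * s) * (k * s)))%nat).
  set (n2 := (2 * n + k * s)%nat).
  set (X := INR n).
  assert (E1 : INR n1 = INR s * (3 * X ^ 2 + 3 * X * (INR k * INR s) + (INR k * INR s) ^ 2)).
  { unfold n1, X. rewrite !mult_INR, !plus_INR, !mult_INR. simpl. ring. }
  assert (E2 : INR n2 = 2 * X + INR k * INR s).
  { unfold n2, X. rewrite !plus_INR, !mult_INR. simpl. ring. }
  unfold tdist, cubic_seq.
  replace (al * INR n ^ 3 + be * INR n ^ 2 - (al * INR (n + k * s) ^ 3 + be * INR (n + k * s) ^ 2))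
    with (- (INR n1 * (INR k * al) + INR n2 * (INR s * (INR k * be)))).
  2: { rewrite E1, E2. rewrite plus_INR, mult_INR. unfold X. ring. }
  rewrite tnorm_opp.
  eapply Rle_lt_trans; [apply tnorm_add|].
  eapply Rle_lt_trans; [apply Rplus_le_compat; apply tnorm_nat|].
  rewrite E1, E2.
  apply Rlt_le_trans with (1 / INR k).
  - apply key_bound with (mR := INR (Mf k) + 1); auto.
    + assert (INR s <= INR (Mf k)) by (apply le_INR; lia). lra.
    + apply pos_INR.
    + assert (Hnk : (n <= k * (k * s))%nat) by nia.
      apply le_INR in Hnk. rewrite !mult_INR in Hnk. unfold X. lra.
    + apply tnorm_ge0.
    + left. exact Hk3.
    + apply tnorm_ge0.
  - assert (INR m <= INR k) by (apply le_INR; lia).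
    assert (1 / eps * eps = 1) by (field; lra).
    apply (Rmult_le_reg_r (INR k)); [lra|]. unfold Rdiv. rewrite Rmult_assoc, Rinv_l by lra.
    nra.
Qed.
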